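(* On $T^*\mathrm{Eng}(n)$, for all $i,j,k,l\in\{1,\dots,n\}$ with $i\neq j$ and $k\neq l$, $$\{L_{ij},L_{kl}\}=P_{Y_{n+1}}\big(\delta_{ik}L_{jl}+\delta_{jl}L_{ik}-\delta_{il}L_{jk}-\delta_{jk}L_{il}\big).$$
   Context: $\mathrm{Eng}(n)$ is the simply connected Lie group with Lie algebra basis $X_1,\dots,X_n,Y_0,\dots,Y_{n+1}$ whose only nontrivial brackets (up to antisymmetry) are $[X_i,Y_0]=Y_i$ and $[X_i,Y_i]=Y_{n+1}$, $i=1,\dots,n$; all viewed as left-invariant vector fields. For a vector field $X$, $P_X(\lambda)=\langle\lambda,X\rangle$ on $T^*\mathrm{Eng}(n)$. Poisson brackets (canonical symplectic form) are normalized so that $\{P_X,P_Y\}=P_{[X,Y]}$ for left-invariant $X,Y$. For $i,j\in\{1,\dots,n\}$, $L_{ij}:=P_{X_i}P_{Y_j}-P_{X_j}P_{Y_i}$ (so $L_{ii}=0$); $\delta$ is the Kronecker delta. *)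

(* Defs.v *)
From HB Require Import structures.
From mathcomp Require Import all_boot all_order all_algebra.
From mathcomp Require Import mpoly.
Set Implicit Arguments. Unset Strict Implicit. Unset Printing Implicit Defensive.
Import Order.TTheory GRing.Theory Num.Theory.
Local Open Scope ring_scope.

(* Lie algebra of Eng(n): basis X_1..X_n, Y_0..Y_{n+1}; dimension 2n+2.
   Basis vectors are indexed by 'I_(engdim n):
     X_i  (1 <= i <= n)   has index i-1,
     Y_j  (0 <= j <= n+1) has index n+j. *)
Definition engdim (n : nat) : nat := (n + n).+2.
Definition iX (n i : nat) : 'I_(engdim n) := inord i.-1.
Definition iY (n j : nat) : 'I_(engdim n) := inord (n + j).

(* Fiberwise polynomial functions on T^*Eng(n), in the left trivialisation
   T^*G = G x g^*: the variable 'X_a is the momentum function P_{E_a}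
   of the left-invariant basis field E_a. *)
Notation Pfun R n := {mpoly R[engdim n]}.
Definition PX (R : comNzRingType) n (i : nat) : Pfun R n := 'X_(iX n i).
Definition PY (R : comNzRingType) n (j : nat) : Pfun R n := 'X_(iY n j).

(* P_{[E_a, E_b]} for basis fields E_a, E_b: the only nonzero brackets are
   [X_i,Y_0] = Y_i and [X_i,Y_i] = Y_{n+1} (plus antisymmetry). *)
Definition Pbracket (R : comNzRingType) n (a b : 'I_(engdim n)) : Pfun R n :=
  \sum_(1 <= i < n.+1)
    ( ((a == iX n i) && (b == iY n 0))%:R * PY R n i
    - ((a == iY n 0) && (b == iX n i))%:R * PY R n i
    + ((a == iX n i) && (b == iY n i))%:R * PY R n n.+1
    - ((a == iY n i) && (b == iX n i))%:R * PY R n n.+1 ).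

(* Canonical Poisson bracket of functions on T^*G that are polynomial in the
   momenta P_{E_a} (left-invariant frame), normalised so that
   {P_X, P_Y} = P_{[X,Y]}: the Lie–Poisson bracket
   {f,g} = sum_{a,b} (df/dP_a)(dg/dP_b) P_{[E_a,E_b]}. *)
Definition poisson (R : comNzRingType) n (f g : Pfun R n) : Pfun R n :=
  \sum_(a < engdim n) \sum_(b < engdim n)
     mderiv a f * mderiv b g * @Pbracket R n a b.

Definition Lfun (R : comNzRingType) n (i j : nat) : Pfun R n :=
  PX R n i * PY R n j - PX R n j * PY R n i.

(* Main.v *)
Require Import Defs.
From HB Require Import structures.
From mathcomp Require Import all_boot all_order all_algebra.
From mathcomp Require Import mpoly.
From mathcomp Require Import ring zify.
Set Implicit Arguments. Unset Strict Implicit.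
Import GRing.Theory.
Local Open Scope ring_scope.

Section S.
Variable (R : realFieldType) (n : nat).
Implicit Types f g h : Pfun R n.

Lemma mderiv_X (a c : 'I_(engdim n)) : mderiv a ('X_c : Pfun R n) = (c == a)%:R.
Proof.
rewrite mderivX mnm1E; case: eqP => [<-|_]; last by rewrite scale0r.
have -> : (U_(c) - U_(c))%MM = 0%MM.
  by apply/mnmP => j; rewrite mnmBE mnm0E subnn.
by rewrite mpolyX0 scale1r.
Qed.

Lemma PB_anti (a b : 'I_(engdim n)) : Pbracket R b a = - Pbracket R a b.
Proof.
rewrite /Pbracket -sumrN; apply: eq_bigr => i _.
rewrite !(andbC (b == _)); ring.
Qed.

Lemma poisson_anti f g : poisson f g = - poisson g f.
Proof.
rewrite /poisson exchange_big -sumrN; apply: eq_bigr => a _.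
rewrite -sumrN; apply: eq_bigr => b _.
rewrite PB_anti; ring.
Qed.

Lemma poisson_addl f g h : poisson (f + g) h = poisson f h + poisson g h.
Proof.
rewrite /poisson -big_split; apply: eq_bigr => a _.
rewrite -big_split /=; apply: eq_bigr => b _.
by rewrite mderivD !mulrDl.
Qed.

Lemma poisson_subl f g h : poisson (f - g) h = poisson f h - poisson g h.
Proof.
rewrite /poisson -sumrB; apply: eq_bigr => a _.
rewrite -sumrB; apply: eq_bigr => b _.
by rewrite mderivB !mulrBl.
Qed.

Lemma poisson_mull f g h : poisson (f * g) h = f * poisson g h + g * poisson f h.
Proof.
rewrite /poisson !mulr_sumr -big_split; apply: eq_bigr => a _.
rewrite !mulr_sumr -big_split /=; apply: eq_bigr => b _.
rewrite mderivM; ring.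
Qed.

Lemma poisson_subr f g h : poisson f (g - h) = poisson f g - poisson f h.
Proof.
by rewrite poisson_anti poisson_subl (poisson_anti f g) (poisson_anti f h) opprB opprK addrC.
Qed.

Lemma poisson_mulr f g h : poisson f (g * h) = g * poisson f h + h * poisson f g.
Proof.
rewrite poisson_anti poisson_mull (poisson_anti f g) (poisson_anti f h); ring.
Qed.

Lemma poisson_XX (c d : 'I_(engdim n)) :
  poisson ('X_c : Pfun R n) 'X_d = Pbracket R c d.
Proof.
rewrite /poisson (bigD1 c) //= [X in _ + X]big1 => [|a /negbTE nca]; last first.
  by apply: big1 => b _; rewrite mderiv_X eq_sym nca !mul0r.
rewrite addr0 (bigD1 d) //= [X in _ + X]big1 => [|b /negbTE ndb]; last first.
  by rewrite !mderiv_X eq_sym ndb mulr0 mul0r.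
by rewrite !mderiv_X !eqxx !mul1r !addr0.
Qed.

Lemma inord_eq x y : (x < engdim n)%N -> (y < engdim n)%N ->
  ((inord x : 'I_(engdim n)) == inord y) = (x == y).
Proof. by move=> hx hy; rewrite -val_eqE /= !inordK. Qed.

Lemma sum_delta p (C : Pfun R n) : (1 <= p <= n)%N ->
  \sum_(1 <= i < n.+1) (i == p)%:R * C = C.
Proof.
move=> hp.
rewrite (eq_bigr (fun i => if i == p then C else 0)); last first.
  by move=> i _; case: eqP => _; rewrite ?mul1r ?mul0r.
rewrite -big_mkcond big_nat1_eq ifT //; lia.
Qed.

Ltac solve_term :=
  rewrite /iX /iY !inord_eq; try (rewrite /engdim; lia);
  repeat (case: eqP => ?); try lia; simpl; ring.

Lemma PB_XX p q : (1 <= p <= n)%N -> (1 <= q <= n)%N ->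
  Pbracket R (iX n p) (iX n q) = 0.
Proof.
move=> hp hq; rewrite /Pbracket big_nat_cond big1 // => i /andP[/andP[h1 h2] _].
solve_term.
Qed.

Lemma PB_YY p q : (1 <= p <= n)%N -> (1 <= q <= n)%N ->
  Pbracket R (iY n p) (iY n q) = 0.
Proof.
move=> hp hq; rewrite /Pbracket big_nat_cond big1 // => i /andP[/andP[h1 h2] _].
solve_term.
Qed.

Lemma PB_XY p q : (1 <= p <= n)%N -> (1 <= q <= n)%N ->
  Pbracket R (iX n p) (iY n q) = (p == q)%:R * PY R n n.+1.
Proof.
move=> hp hq; rewrite /Pbracket big_nat_cond.
rewrite (eq_bigr (fun i => (i == p)%:R * ((p == q)%:R * PY R n n.+1))).
  by rewrite -big_nat_cond sum_delta.
move=> i /andP[/andP[h1 h2] _]; solve_term.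
Qed.

Lemma PB_YX p q : (1 <= p <= n)%N -> (1 <= q <= n)%N ->
  Pbracket R (iY n q) (iX n p) = - ((q == p)%:R * PY R n n.+1).
Proof.
by move=> hp hq; rewrite PB_anti PB_XY // eq_sym.
Qed.
End S.

Unset Implicit Arguments.
Theorem lemma8 (R : realFieldType) (n i j k l : nat) :
  (1 <= i <= n)%N -> (1 <= j <= n)%N -> (1 <= k <= n)%N -> (1 <= l <= n)%N ->
  i != j -> k != l ->
  poisson (Lfun R n i j) (Lfun R n k l) =
  PY R n n.+1 *
    ( (i == k)%:R * Lfun R n j l + (j == l)%:R * Lfun R n i k
    - (i == l)%:R * Lfun R n j k - (j == k)%:R * Lfun R n i l ).
Proof.
move=> hi hj hk hl _ _.
rewrite /Lfun.
rewrite !(poisson_subl, poisson_subr, poisson_mull, poisson_mulr).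
rewrite /PX /PY !poisson_XX !PB_XX // !PB_YY // !PB_XY // !PB_YX //.
rewrite /PX /PY; ring.
Qed.
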